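(* Let $X$ be a real Banach space and $h:X\times X^*\to\mathbb{R}\cup\{\pm\infty\}$ a proper lower semicontinuous convex function. Then $D(\mathcal{J}\delta_{D(h)})\subseteq 0^+D(\mathcal{J}h)$.
   Context: $X$ is identified with its canonical image in $X^{**}$. $D(f)=\{z\;|\;f(z)<\infty\}$; $\delta_C$ is the indicator function of $C$ (0 on $C$, $+\infty$ elsewhere). For $g:X\times X^*\to\mathbb{R}\cup\{\pm\infty\}$, the conjugate is $g^*:X^*\times X^{**}\to\mathbb{R}\cup\{\pm\infty\}$, $g^*(x^*,x^{**})=\sup_{(y,y^* )\in X\times X^*}\langle y,x^*\rangle+\langle x^{**},y^*\rangle-g(y,y^* )$, and $(\mathcal{J}g)(x,x^* )=g^*(x^*,x)$. The recession cone of a set $C$ in a vector space is $0^+C=\{u\;|\;x+\lambda u\in C\ \forall x\in C,\ \forall\lambda\geq0\}$. *)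

(* Defs.v *)
From HB Require Import structures.
From mathcomp Require Import all_boot all_order all_algebra.
From mathcomp Require Import all_classical all_reals all_analysis.
Set Implicit Arguments. Unset Strict Implicit. Unset Printing Implicit Defensive.
Import Order.TTheory GRing.Theory Num.Theory.
Import numFieldNormedType.Exports.
Local Open Scope classical_set_scope.
Local Open Scope ring_scope.

(* The topological dual X^*
   is represented as the set of continuous linear functionals on X, inside
   the type X -> R.
   The pairing <y, x'> is x' y, and the pairing <x, y'> between the
   canonical image of x in X^** and y' in X^* is y' x. *)

Section Defs.
Variables (R : realType) (X : completeNormedModType R).

Definition dual : set (X -> R) :=
  [set f | (forall (a : R) (x y : X), f (a *: x + y) = a * f x + f y)
           /\ continuous f].

Definition XXs : set (X * (X -> R)) := [set p | dual p.2].

Definition dual_norm (f : X -> R) : R :=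
  sup [set `|f x| | x in [set x : X | `|x| <= 1]].

Definition dom (f : X * (X -> R) -> \bar R) : set (X * (X -> R)) :=
  [set z | XXs z /\ (f z < +oo)%E].

Definition indicator (C : set (X * (X -> R))) (z : X * (X -> R)) : \bar R :=
  if `[< C z >] then 0%E else +oo%E.

(* (J g)(x, x') = g^*(x', x)
   = sup_{(y,y') in X x X^*} <y, x'> + <x, y'> - g(y, y') *)
Definition Jconj (g : X * (X -> R) -> \bar R) (z : X * (X -> R)) : \bar R :=
  ereal_sup [set ((z.2 y + y' z.1)%:E - g (y, y'))%E
            | y in [set: X] & y' in dual].

Definition proper_fun (h : X * (X -> R) -> \bar R) : Prop :=
  (forall z, XXs z -> h z != -oo%E) /\ exists z, XXs z /\ (h z < +oo)%E.

Definition convex_fun (h : X * (X -> R) -> \bar R) : Prop :=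
  forall (p q : X * (X -> R)) (t a b : R), XXs p -> XXs q ->
    0 <= t <= 1 -> (h p <= a%:E)%E -> (h q <= b%:E)%E ->
    (h ((t *: p.1 + (1 - t) *: q.1)%R,
        fun y => (t * p.2 y + (1 - t) * q.2 y)%R)
      <= (t * a + (1 - t) * b)%R%:E)%E.

(* lower semicontinuity for the product of the norm topologies of X and
   of X^* (dual norm) *)
Definition lsc_fun (h : X * (X -> R) -> \bar R) : Prop :=
  forall (p : X * (X -> R)) (a : R), XXs p -> (a%:E < h p)%E ->
    exists2 e : R, 0 < e & forall q : X * (X -> R), XXs q ->
      (`|q.1 - p.1| < e)%R -> (dual_norm (fun y => q.2 y - p.2 y) < e)%R ->
      (a%:E < h q)%E.

Definition rec_cone (C : set (X * (X -> R))) : set (X * (X -> R)) :=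
  [set u | XXs u /\ forall x, C x -> forall l : R, 0 <= l ->
     C (x.1 + l *: u.1, fun y => x.2 y + l * u.2 y)].

End Defs.

(* Main.v *)
Require Import Defs.
From HB Require Import structures.
From mathcomp Require Import all_boot all_order all_algebra.
From mathcomp Require Import all_classical all_reals all_analysis.
From mathcomp Require Import ring lra.
Import Order.TTheory GRing.Theory Num.Theory.
Import numFieldNormedType.Exports.
Local Open Scope classical_set_scope.
Local Open Scope ring_scope.

Lemma real_ub (R : realType) (e : \bar R) : (e < +oo)%E -> exists M : R, (e <= M%:E)%E.
Proof.
case: e => [r| |] //= _; first by exists r.
by exists 0; rewrite leNye.
Qed.

Lemma dual_comb (R : realType) (X : completeNormedModType R) (f g : X -> R) (l : R) :
  dual f -> dual g -> dual (fun y => f y + l * g y).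
Proof.
move=> [lf cf] [lg cg]; split.
  by move=> a x y; rewrite lf lg; ring.
move=> z.
have := @continuousD _ _ _ f (fun y => l * g y) z (cf z).
apply.
apply: continuousM; first exact: cvg_cst.
exact: cg.
Qed.

Theorem proposition3p1 (R : realType) (X : completeNormedModType R)
    (h : X * (X -> R) -> \bar R) :
  proper_fun h -> convex_fun h -> lsc_fun h ->
  dom (Jconj (indicator (dom h))) `<=` rec_cone (dom (Jconj h)).
Proof.
move=> [hnoo _] _ _ u [Xu Ju].
split; first exact: Xu.
move=> x [Xx Jx] l l0.
have [S HS] := real_ub _ _ Ju.
have [M HM] := real_ub _ _ Jx.
split; first exact: dual_comb.
apply: (@le_lt_trans _ _ (M + l * S)%:E); last by rewrite ltry.
apply: ge_ereal_sup => t [y _ [y' Dy' <-]] /=.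
have Xy : XXs (y, y') by [].
case Eh: (h (y, y')) => [r| |]; last first.
- by move: (hnoo _ Xy); rewrite Eh.
- by rewrite addeNy leNye.
have Hx : ((x.2 y + y' x.1)%:E - r%:E <= M%:E)%E.
  apply: le_trans HM; apply: ereal_sup_ubound; exists y => //; exists y' => //.
  by rewrite Eh.
have Hu : ((u.2 y + y' u.1)%:E <= S%:E)%E.
  apply: le_trans HS; apply: ereal_sup_ubound; exists y => //; exists y' => //.
  rewrite /indicator asboolT; first by rewrite sube0.
  by split => //; rewrite Eh ltry.
rewrite -EFinB lee_fin; rewrite -EFinB lee_fin in Hx; rewrite lee_fin in Hu.
case: Dy' => [ly' _].
have -> : y' (x.1 + l *: u.1) = l * y' u.1 + y' x.1.
  by rewrite addrC ly'.
have := ler_wpM2l l0 Hu.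
move: Hx Hu; generalize (x.2 y) (y' x.1) (u.2 y) (y' u.1) => a b c d Hx Hu H.
rewrite mulrDr in H.
lra.
Qed.
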